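(* For any finite alphabet $\mathfrak{G}$, the $\mathfrak{G}$-prefix poset is a meet-semilattice for the operation $\wedge$. Moreover, each interval $[\mathfrak{s},\mathfrak{t}]$ of this poset is a distributive lattice for the operations $\wedge$ and $\vee$.
   Context: $\mathfrak{G}$ is a finite alphabet (letters with arities $\geq 1$). A $\mathfrak{G}$-tree is either the leaf (the tree with no internal node) or $\mathtt{a}[\mathfrak{t}_1,\dots,\mathfrak{t}_{|\mathtt{a}|}]$, a root decorated by $\mathtt{a}\in\mathfrak{G}$ with children $\mathfrak{t}_1,\dots,\mathfrak{t}_{|\mathtt{a}|}$. The $\mathfrak{G}$-prefix poset is the set of $\mathfrak{G}$-trees ordered by $\mathfrak{s}\preceq\mathfrak{t}$ iff $\mathfrak{s}$ is a prefix of $\mathfrak{t}$, i.e. $\mathfrak{t}$ is obtained by grafting some $\mathfrak{G}$-trees onto the leaves of $\mathfrak{s}$. The intersection $\wedge$ is defined by: $\mathfrak{t}\wedge\text{leaf} = \text{leaf} = \text{leaf}\wedge\mathfrak{t}$; $\mathtt{a}[\dots]\wedge\mathtt{b}[\dots] = \text{leaf}$ if $\mathtt{a}\neq\mathtt{b}$; $\mathtt{a}[\mathfrak{t}_1,\dots,\mathfrak{t}_k]\wedge\mathtt{a}[\mathfrak{t}'_1,\dots,\mathfrak{t}'_k] = \mathtt{a}[\mathfrak{t}_1\wedge\mathfrak{t}'_1,\dots,\mathfrak{t}_k\wedge\mathfrak{t}'_k]$. The partial union $\vee$ is defined by: $\mathfrak{t}\vee\text{leaf} = \mathfrak{t} =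 \text{leaf}\vee\mathfrak{t}$; $\mathtt{a}[\mathfrak{t}_1,\dots,\mathfrak{t}_k]\vee\mathtt{a}[\mathfrak{t}'_1,\dots,\mathfrak{t}'_k] = \mathtt{a}[\mathfrak{t}_1\vee\mathfrak{t}'_1,\dots,\mathfrak{t}_k\vee\mathfrak{t}'_k]$; and it is undefined on two trees whose roots have different decorations. *)

(* Defs.v *)
From mathcomp Require Import all_boot.
Set Implicit Arguments. Unset Strict Implicit. Unset Printing Implicit Defensive.

Section Trees.
Variable G : finType.
Variable ar : G -> nat.

Inductive tree : Type :=
  | Leaf : tree
  | Node : G -> seq tree -> tree.

Fixpoint gwf (t : tree) : bool :=
  match t with
  | Leaf => true
  | Node a ts =>
      (size ts == ar a) &&
      (fix go (l : seq tree) : bool :=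
         match l with [::] => true | x :: xs => gwf x && go xs end) ts
  end.

(* s is a gprefix of t: t is obtained by grafting trees on the leaves of s. *)
Fixpoint gprefix (s t : tree) : bool :=
  match s, t with
  | Leaf, _ => true
  | Node _ _, Leaf => false
  | Node a ss, Node b ts =>
      (a == b) &&
      (fix go (l1 l2 : seq tree) : bool :=
         match l1, l2 with
         | [::], [::] => true
         | x :: xs, y :: ys => gprefix x y && go xs ys
         | _, _ => false
         end) ss ts
  end.

Fixpoint gmeet (s t : tree) : tree :=
  match s, t with
  | Node a ss, Node b ts =>
      if a == b then
        Node a ((fix go (l1 l2 : seq tree) : seq tree :=
                   match l1, l2 with
                   | x :: xs, y :: ys => gmeet x y :: go xs ys
                   | _, _ => [::]
                   end) ss ts)
      else Leaf
  | _, _ => Leaf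
  end.

Fixpoint gjoin (s t : tree) : option tree :=
  match s, t with
  | Leaf, _ => Some t
  | _, Leaf => Some s
  | Node a ss, Node b ts =>
      if a == b then
        match (fix go (l1 l2 : seq tree) : option (seq tree) :=
                 match l1, l2 with
                 | [::], [::] => Some [::]
                 | x :: xs, y :: ys =>
                     match gjoin x y, go xs ys with
                     | Some z, Some zs => Some (z :: zs)
                     | _, _ => None
                     end
                 | _, _ => None
                 end) ss ts with
        | Some us => Some (Node a us)
        | None => None
        end
      else None
  end.

End Trees.

(* Main.v *)
Require Import Defs.
From mathcomp Require Import all_boot.
Set Implicit Arguments. Unset Strict Implicit. Unset Printing Implicit Defensive.

Fixpoint AllP {G : finType} (P : tree G -> Prop) (l : seq (tree G)) : Prop :=
  match l with [::] => True | x :: xs => P x /\ AllP P xs end.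

Fixpoint tree_ind2 {G : finType} (P : tree G -> Prop) (HL : P (Leaf G))
  (HN : forall a ts, AllP P ts -> P (Node a ts)) (t : tree G) : P t :=
  match t with
  | Leaf => HL
  | Node a ts => HN a ts ((fix go (l : seq (tree G)) : AllP P l :=
        match l return AllP P l with
        | [::] => I
        | x :: xs => conj (tree_ind2 HL HN x) (go xs) end) ts)
  end.

Definition gmeetl {G : finType} := fix go (l1 l2 : seq (tree G)) : seq (tree G) :=
                   match l1, l2 with
                   | x :: xs, y :: ys => gmeet x y :: go xs ys
                   | _, _ => [::]
                   end.

Definition gjoinl {G : finType} := fix go (l1 l2 : seq (tree G)) : option (seq (tree G)) :=
                 match l1, l2 with
                 | [::], [::] => Some [::]
                 | x :: xs, y :: ys =>
                     match gjoin x y, go xs ys with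
                     | Some z, Some zs => Some (z :: zs)
                     | _, _ => None
                     end
                 | _, _ => None
                 end.

Section S.
Context {G : finType} (ar : G -> nat).

Lemma gprefix_NN (a b : G) ss ts : gprefix (Node a ss) (Node b ts) = (a == b) && all2 (@gprefix G) ss ts.
Proof. reflexivity. Qed.
Lemma gwf_N (a : G) ts : gwf ar (Node a ts) = (size ts == ar a) && all (gwf ar) ts.
Proof. reflexivity. Qed.
Lemma gmeet_NN (a b : G) ss ts : gmeet (Node a ss) (Node b ts) = if a == b then Node a (gmeetl ss ts) else Leaf G.
Proof. reflexivity. Qed.
Lemma gjoin_NN (a b : G) ss ts : gjoin (Node a ss) (Node b ts) =
  if a == b then match gjoinl ss ts with Some us => Some (Node a us) | None => None end else None.
Proof. reflexivity. Qed.
Lemma gjoinl_cons (x y : tree G) xs ys : gjoinl (x :: xs) (y :: ys) =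
  match gjoin x y, gjoinl xs ys with Some z, Some zs => Some (z :: zs) | _, _ => None end.
Proof. reflexivity. Qed.
Lemma gjoin_l0 (x : tree G) : gjoin x (Leaf G) = Some x.
Proof. by case: x. Qed.
Lemma gprefix_0 (x : tree G) : gprefix (Leaf G) x.
Proof. by []. Qed.
Lemma gprefix_N0 (a : G) ts : gprefix (Node a ts) (Leaf G) = false.
Proof. by []. Qed.
Lemma gmeet_0l (x : tree G) : gmeet (Leaf G) x = Leaf G.
Proof. by []. Qed.
Lemma gmeet_0r (x : tree G) : gmeet x (Leaf G) = Leaf G.
Proof. by case: x. Qed.

Lemma prefix_refl (s : tree G) : gprefix s s.
Proof.
elim/(@tree_ind2 G): s => [|a ts IH] //; rewrite gprefix_NN eqxx /=.
by elim: ts IH => [|x xs IHl] //= [Hx Hxs]; rewrite Hx IHl.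
Qed.

Lemma prefix_antisym (s t : tree G) : gprefix s t -> gprefix t s -> s = t.
Proof.
elim/(@tree_ind2 G): s t => [|a ss IH] [|b ts] //; rewrite ?gprefix_N0 //.
rewrite !gprefix_NN => /andP[/eqP<- H1] /andP[_ H2]; congr Node.
elim: ss ts IH H1 H2 => [|x xs IHl] [|y ys] //= [Hx Hxs] /andP[h1 h1'] /andP[h2 h2'].
by rewrite (Hx y h1 h2) (IHl ys Hxs h1' h2').
Qed.

Lemma prefix_trans (s t u : tree G) : gprefix s t -> gprefix t u -> gprefix s u.
Proof.
elim/(@tree_ind2 G): s t u => [|a ss IH] [|b ts] [|c us] //; rewrite ?gprefix_N0 //.
rewrite !gprefix_NN => /andP[/eqP<- H1] /andP[/eqP<- H2]; rewrite eqxx /=.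
elim: ss ts us IH H1 H2 => [|x xs IHl] [|y ys] [|z zs] //= [Hx Hxs] /andP[h1 h1'] /andP[h2 h2'].
by rewrite (Hx y z h1 h2) (IHl ys zs Hxs h1' h2').
Qed.

Lemma size_gmeetl (ss ts : seq (tree G)) : size (gmeetl ss ts) = minn (size ss) (size ts).
Proof. elim: ss ts => [|x xs IH] [|y ys] //=; by rewrite IH minnSS. Qed.

Lemma meet_wf (s t : tree G) : gwf ar s -> gwf ar t -> gwf ar (gmeet s t).
Proof.
elim/(@tree_ind2 G): s t => [|a ss IH] [|b ts] //; rewrite gmeet_NN.
case: eqP => [<-|] // ; rewrite !gwf_N => /andP[/eqP s1 w1] /andP[/eqP s2 w2].
rewrite size_gmeetl s1 s2 minnn eqxx /=.
elim: ss ts IH w1 w2 {s1 s2} => [|x xs IHl] [|y ys] //= [Hx Hxs] /andP[h1 h1'] /andP[h2 h2'].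
by rewrite (Hx y h1 h2) (IHl ys Hxs h1' h2').
Qed.

Lemma meet_l (s t : tree G) : gwf ar s -> gwf ar t -> gprefix (gmeet s t) s.
Proof.
elim/(@tree_ind2 G): s t => [|a ss IH] [|b ts] //; rewrite gmeet_NN.
case: eqP => [<-|] // ; rewrite !gwf_N gprefix_NN eqxx /= => /andP[/eqP s1 w1] /andP[/eqP s2 w2].
have : size ss = size ts by rewrite s1 s2.
elim: ss ts IH w1 w2 {s1 s2} => [|x xs IHl] [|y ys] //= [Hx Hxs] /andP[h1 h1'] /andP[h2 h2'] [] e.
by rewrite (Hx y h1 h2) (IHl ys Hxs h1' h2').
Qed.

Lemma meet_r (s t : tree G) : gwf ar s -> gwf ar t -> gprefix (gmeet s t) t.
Proof.
elim/(@tree_ind2 G): s t => [|a ss IH] [|b ts] //; rewrite gmeet_NN.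
case: eqP => [<-|] // ; rewrite !gwf_N gprefix_NN eqxx /= => /andP[/eqP s1 w1] /andP[/eqP s2 w2].
have : size ss = size ts by rewrite s1 s2.
elim: ss ts IH w1 w2 {s1 s2} => [|x xs IHl] [|y ys] //= [Hx Hxs] /andP[h1 h1'] /andP[h2 h2'] [] e.
by rewrite (Hx y h1 h2) (IHl ys Hxs h1' h2').
Qed.

Lemma meet_glb (u s t : tree G) : gprefix u s -> gprefix u t -> gprefix u (gmeet s t).
Proof.
elim/(@tree_ind2 G): u s t => [|a us IH] [|b ss] [|c ts] //; rewrite ?gprefix_N0 //.
rewrite !gprefix_NN gmeet_NN => /andP[/eqP<- H1] /andP[/eqP<- H2]; rewrite eqxx gprefix_NN eqxx /=.
elim: us ss ts IH H1 H2 => [|x xs IHl] [|y ys] [|z zs] //= [Hx Hxs] /andP[h1 h1'] /andP[h2 h2'].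
by rewrite (Hx y z h1 h2) (IHl ys zs Hxs h1' h2').
Qed.

Lemma join_ex (u v t : tree G) : gprefix u t -> gprefix v t -> exists j, gjoin u v = Some j.
Proof.
elim/(@tree_ind2 G): u v t => [|a us IH] [|b vs] [|c ts] //; rewrite ?gprefix_N0 //;
  try by eexists.
rewrite !gprefix_NN gjoin_NN => /andP[/eqP-> H1] /andP[/eqP-> H2]; rewrite eqxx.
suff [js ->] : exists js, gjoinl us vs = Some js by eexists.
elim: us vs ts IH H1 H2 => [|x xs IHl] [|y ys] [|z zs] //=; try by eexists.
move=> [Hx Hxs] /andP[h1 h1'] /andP[h2 h2'].
have [j ->] := Hx y z h1 h2. by have [js ->] := IHl ys zs Hxs h1' h2'; eexists.
Qed.

Lemma join_l (u v j : tree G) : gjoin u v = Some j -> gprefix u j.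
Proof.
elim/(@tree_ind2 G): u v j => [|a us IH] [|b vs] j; [by []|by []|by rewrite gjoin_l0 => -[<-]; apply: prefix_refl|].
rewrite gjoin_NN; case: eqP => // _.
case E: gjoinl => [js|] // [<-]; rewrite gprefix_NN eqxx /=.
elim: us vs js IH E => [|x xs IHl] [|y ys] js //=; first by move=> _ [<-].
move=> [Hx Hxs]; case E1: (gjoin x y) => [z|] //; case E2: (gjoinl xs ys) => [zs|] // [<-] /=.
by rewrite (Hx _ _ E1) (IHl _ _ Hxs E2).
Qed.

Lemma join_r (u v j : tree G) : gjoin u v = Some j -> gprefix v j.
Proof.
elim/(@tree_ind2 G): u v j => [|a us IH] [|b vs] j; [by move=> [<-]|by move=> [<-]; apply: prefix_refl|by []|].
rewrite gjoin_NN; case: eqP => // ->.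
case E: gjoinl => [js|] // [<-]; rewrite gprefix_NN eqxx /=.
elim: us vs js IH E => [|x xs IHl] [|y ys] js //=; first by move=> _ [<-].
move=> [Hx Hxs]; case E1: (gjoin x y) => [z|] //; case E2: (gjoinl xs ys) => [zs|] // [<-] /=.
by rewrite (Hx _ _ E1) (IHl _ _ Hxs E2).
Qed.

Lemma join_lub (u v j z : tree G) : gjoin u v = Some j -> gprefix u z -> gprefix v z -> gprefix j z.
Proof.
elim/(@tree_ind2 G): u v j z => [|a us IH] [|b vs] j z; [by move=> [<-]|by move=> [<-]|by rewrite gjoin_l0 => -[<-]|].
rewrite gjoin_NN; case: eqP => // _.
case E: gjoinl => [js|] // [<-]; case: z => [|c zs] //; rewrite !gprefix_NN.
move=> /andP[-> H1] /andP[_ H2] /=.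
elim: us vs js zs IH E H1 H2 => [|x xs IHl] [|y ys] js [|w ws] //=; try by move=> _ [<-].
move=> [Hx Hxs]; case E1: (gjoin x y) => [z|] //; case E2: (gjoinl xs ys) => [zs|] // [<-] /=.
move=> /andP[h1 h1'] /andP[h2 h2'].
by rewrite (Hx _ _ _ E1 h1 h2) (IHl _ _ _ Hxs E2 h1' h2').
Qed.

Lemma join_wf (u v j : tree G) : gjoin u v = Some j -> gwf ar u -> gwf ar v -> gwf ar j.
Proof.
elim/(@tree_ind2 G): u v j => [|a us IH] [|b vs] j; [by move=> [<-]|by move=> [<-]|by rewrite gjoin_l0 => -[<-]|].
rewrite gjoin_NN; case: eqP => // _.
case E: gjoinl => [js|] // [<-]; rewrite !gwf_N => /andP[/eqP s1 w1] /andP[_ w2].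
rewrite -s1; apply/andP.
elim: us vs js IH E w1 w2 {s1} => [|x xs IHl] [|y ys] js //=; first by move=> _ [<-].
move=> [Hx Hxs]; case E1: (gjoin x y) => [z|] //; case E2: (gjoinl xs ys) => [zs|] // [<-] /=.
move=> /andP[h1 h1'] /andP[h2 h2'].
have [/eqP -> ->] := IHl _ _ Hxs E2 h1' h2'. by rewrite (Hx _ _ E1 h1 h2).
Qed.

Lemma distr (u v w t : tree G) : gprefix u t -> gprefix v t -> gprefix w t ->
  omap (gmeet u) (gjoin v w) = gjoin (gmeet u v) (gmeet u w).
Proof.
elim/(@tree_ind2 G): u v w t => [|a us IH] v w t.
  move=> _ Hv Hw; have [j ->] := join_ex Hv Hw; by [].
case: t => [|c ts]; first by rewrite gprefix_N0.
case: v => [|b vs] //.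
case: w => [|d ws]; first by move=> *; rewrite !gjoin_l0.
rewrite !gprefix_NN => /andP[/eqP-> H1] /andP[/eqP-> H2] /andP[/eqP-> H3].
rewrite gjoin_NN !gmeet_NN !eqxx gjoin_NN eqxx.
suff : omap (gmeetl us) (gjoinl vs ws) = gjoinl (gmeetl us vs) (gmeetl us ws).
  move=> H; case: (gjoinl vs ws) H => [js|]; case: (gjoinl (gmeetl us vs) (gmeetl us ws)) => [ks|] // [<-].
  by apply: (congr1 Some); rewrite gmeet_NN eqxx.
elim: us vs ws ts IH H1 H2 H3 => [|x xs IHl] [|y ys] [|z zs] [|r rs] //.
move=> [Hx Hxs] /= /andP[h1 h1'] /andP[h2 h2'] /andP[h3 h3'].
rewrite -(Hx _ _ _ h1 h2 h3) -(IHl _ _ _ Hxs h1' h2' h3').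
by case: (gjoin y z) => [j|]; case: (gjoinl ys zs) => [js|].
Qed.
End S.

Unset Implicit Arguments.

Theorem proposition3p5 (G : finType) (ar : G -> nat)
  (ar_pos : forall a : G, 0 < ar a) :
  (* the gprefix order is a partial order on G-trees *)
  (forall s, gwf ar s -> gprefix s s) /\
  (forall s t, gwf ar s -> gwf ar t -> gprefix s t -> gprefix t s -> s = t) /\
  (forall s t u, gwf ar s -> gwf ar t -> gwf ar u ->
     gprefix s t -> gprefix t u -> gprefix s u) /\
  (* gmeet-semilattice for the intersection *)
  (forall s t, gwf ar s -> gwf ar t ->
     [/\ gwf ar (gmeet s t), gprefix (gmeet s t) s, gprefix (gmeet s t) t &
         forall u, gwf ar u -> gprefix u s -> gprefix u t -> gprefix u (gmeet s t)]) /\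
  (* every interval [s, t] is a distributive lattice for gmeet and gjoin *)
  (forall s t, gwf ar s -> gwf ar t ->
     (forall u v, gwf ar u -> gwf ar v ->
        gprefix s u -> gprefix u t -> gprefix s v -> gprefix v t ->
        (gprefix s (gmeet u v) /\ gprefix (gmeet u v) t) /\
        (exists j, gjoin u v = Some j /\ gwf ar j /\ gprefix s j /\ gprefix j t /\
                       gprefix u j /\ gprefix v j /\
                       forall z, gwf ar z -> gprefix s z -> gprefix z t ->
                         gprefix u z -> gprefix v z -> gprefix j z)) /\
     (forall u v w, gwf ar u -> gwf ar v -> gwf ar w ->
        gprefix s u -> gprefix u t -> gprefix s v -> gprefix v t ->
        gprefix s w -> gprefix w t ->
        omap (gmeet u) (gjoin v w) = gjoin (gmeet u v) (gmeet u w))).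
Proof.
split; first by move=> s _; exact: prefix_refl.
split; first by move=> s t _ _; exact: prefix_antisym.
split; first by move=> s t u _ _ _; exact: prefix_trans.
split.
  move=> s t ws wt; split.
  - exact: (meet_wf ws wt).
  - exact: (meet_l ws wt).
  - exact: (meet_r ws wt).
  - by move=> u _; exact: meet_glb.
move=> s t ws wt; split.
  move=> u v wu wv su ut sv vt; split.
    split; first exact: meet_glb.
    exact: prefix_trans (meet_l wu wv) ut.
  have [j E] := join_ex ut vt.
  exists j; split=> //; split; first exact: (join_wf E wu wv).
  split; first exact: prefix_trans su (join_l E).
  split; first exact: join_lub E ut vt.
  split; first exact: join_l E.
  split; first exact: join_r E.
  by move=> z _ _ _ uz vz; exact: join_lub E uz vz.
move=> u v w _ _ _ _ ut _ vt _ wt2; exact: distr ut vt wt2.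
Qed.
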